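(* Assume (A1)–(A3) below. Then for each instrument $\ell\in\{1,\dots,L\}$, $$\mathrm{Wald}_\ell=\sum_{t\in\mathcal T}\mathrm{LATE}_t\,\alpha_t(\ell),\qquad \sum_{t\in\mathcal T}\alpha_t(\ell)=1,$$ where $\alpha_t(\ell)=\theta_t\,\varphi_t(\ell)/\pi_\ell$ and $$\varphi_t(\ell)=\sum_{z_{-\ell}\in\{0,1\}^{L-1}}\bigl[t(1,z_{-\ell})\,q_\ell(z_{-\ell})-t(0,z_{-\ell})\,q^0_\ell(z_{-\ell})\bigr].$$
   Context: We observe i.i.d. draws of $(Y_i,D_i,Z_{1i},\dots,Z_{Li})$ with $Y_i\in\mathbb R$, $D_i\in\{0,1\}$ and $L\ge2$ binary instruments $Z_{\ell i}\in\{0,1\}$; $\mathbf Z_i=(Z_{1i},\dots,Z_{Li})'$. Each unit has potential outcomes $Y_i(0),Y_i(1)$ and a potential treatment function (its ''compliance type'') $D_i(\cdot):\{0,1\}^L\to\{0,1\}$; observed $D_i=D_i(\mathbf Z_i)$ and $Y_i=D_iY_i(1)+(1-D_i)Y_i(0)$. $\mathcal T$ is the set of compliance types, $\theta_t=P(D_i(\cdot)=t)$, $\mathrm{LATE}_t=\mathbb E[Y_i(1)-Y_i(0)\mid D_i(\cdot)=t]$. For a type $t$, $t(z_\ell,z_{-\ell})$ denotes its treatment decision at instrument value with $\ell$-th coordinate $z_\ell$ and remaining coordinates $z_{-\ell}$. Let $p_\ell=P(Z_{\ell i}=1)$, $\pi_\ell=\mathbb E[D_i\mid Z_{\ell i}=1]-\mathbb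 E[D_i\mid Z_{\ell i}=0]$, $\rho_\ell=\mathbb E[Y_i\mid Z_{\ell i}=1]-\mathbb E[Y_i\mid Z_{\ell i}=0]$, $\mathrm{Wald}_\ell=\rho_\ell/\pi_\ell$, $\Sigma_Z=\mathrm{Var}(\mathbf Z_i)$. With $Z_{-\ell}$ the vector of the other $L-1$ instruments, $q_\ell(z_{-\ell})=P(Z_{-\ell}=z_{-\ell}\mid Z_\ell=1)$ and $q^0_\ell(z_{-\ell})=P(Z_{-\ell}=z_{-\ell}\mid Z_\ell=0)$. Assumptions: (A1) $(Y_i(0),Y_i(1),D_i(\cdot))$ is independent of $\mathbf Z_i$. (A2) For every $i$, $D_i(z)$ is nondecreasing in each coordinate $z_k$, $k=1,\dots,L$. (A3) $p_\ell>0$ and $\pi_\ell>0$ for each $\ell$, and $\Sigma_Z$ is positive definite. *)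

(* Defs.v *)
From HB Require Import structures.
From mathcomp Require Import all_boot all_order all_algebra.
From mathcomp Require Import all_classical all_reals all_analysis.
Set Implicit Arguments. Unset Strict Implicit. Unset Printing Implicit Defensive.
Import Order.TTheory GRing.Theory Num.Theory.
Local Open Scope classical_set_scope.
Local Open Scope ring_scope.

Section IVModel.
Context {d : measure_display} {T : measurableType d} {R : realType}
  (P : probability T R) (L : nat).

(* instrument values z in {0,1}^L, and compliance types {0,1}^L -> {0,1} *)
Notation Zval := {ffun 'I_L -> bool}.
Notation ctype := {ffun Zval -> bool}.

Variables (Y0 Y1 : T -> R) (Tp : T -> ctype) (Z : T -> Zval).

Definition Dobs (w : T) : bool := Tp w (Z w).
Definition Yobs (w : T) : R := if Dobs w then Y1 w else Y0 w.

Definition pr (A : set T) : R := fine (P A).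
Definition condE (X : T -> R) (A : set T) : R :=
  fine (\int[P]_(w in A) (X w)%:E) / pr A.

Definition Zl1 (l : 'I_L) : set T := [set w | Z w l].
Definition Zl0 (l : 'I_L) : set T := [set w | ~~ Z w l].

Definition p_ (l : 'I_L) : R := pr (Zl1 l).
Definition pi_ (l : 'I_L) : R :=
  condE (fun w => (Dobs w)%:R) (Zl1 l) - condE (fun w => (Dobs w)%:R) (Zl0 l).
Definition rho_ (l : 'I_L) : R := condE Yobs (Zl1 l) - condE Yobs (Zl0 l).
Definition Wald (l : 'I_L) : R := rho_ l / pi_ l.

Definition theta (t : ctype) : R := pr [set w | Tp w = t].
Definition LATE (t : ctype) : R := condE (fun w => Y1 w - Y0 w) [set w | Tp w = t].

(* z with its l-th coordinate set to b: the instrument value (b, z_{-l}) *)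
Definition setc (z : Zval) (l : 'I_L) (b : bool) : Zval :=
  [ffun j => if j == l then b else z j].

(* q_l(z_{-l}) = P(Z_{-l} = z_{-l} | Z_l = 1), q^0_l(z_{-l}) = P(Z_{-l} = z_{-l} | Z_l = 0);
   only the coordinates of z other than l matter *)
Definition q_ (l : 'I_L) (z : Zval) : R :=
  pr [set w | Z w l /\ forall j, j != l -> Z w j = z j] / pr (Zl1 l).
Definition q0_ (l : 'I_L) (z : Zval) : R :=
  pr [set w | ~~ Z w l /\ forall j, j != l -> Z w j = z j] / pr (Zl0 l).

(* the sum over z_{-l} in {0,1}^(L-1) is indexed by the z in {0,1}^L with z_l = 0 *)
Definition phi (t : ctype) (l : 'I_L) : R :=
  \sum_(z : Zval | ~~ z l)
    ((t (setc z l true))%:R * q_ l z - (t (setc z l false))%:R * q0_ l z).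

Definition alpha (t : ctype) (l : 'I_L) : R := theta t * phi t l / pi_ l.

Definition SigmaZ : 'M[R]_L :=
  \matrix_(i, j) fine (covariance P (fun w => (Z w i)%:R) (fun w => (Z w j)%:R)).

Definition posdef (M : 'M[R]_L) : Prop :=
  forall v : 'rV[R]_L, v != 0 -> 0 < (v *m M *m v^T) 0 0.

(* (A1): (Y(0), Y(1), D(.)) independent of Z (product rule on generating rectangles) *)
Definition indepA1 : Prop :=
  forall (B0 B1 : set R) (t : ctype) (z : Zval), measurable B0 -> measurable B1 ->
    P ([set w | B0 (Y0 w) /\ B1 (Y1 w) /\ Tp w = t] `&` [set w | Z w = z]) =
    (P [set w | B0 (Y0 w) /\ B1 (Y1 w) /\ Tp w = t] * P [set w | Z w = z])%E.

Definition monotoneA2 : Prop :=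
  forall (w : T) (z : Zval) (k : 'I_L), (Tp w z <= Tp w (setc z k true))%N.

End IVModel.

(* Main.v *)
Require Import Defs.
From HB Require Import structures.
From mathcomp Require Import all_boot all_order all_algebra.
From mathcomp Require Import all_classical all_reals all_analysis.
From mathcomp Require Import measurable_realfun.
From mathcomp Require Import ring lra.
Import Order.TTheory GRing.Theory Num.Theory.
Local Open Scope classical_set_scope.
Local Open Scope ring_scope.
Local Open Scope ereal_scope.
Section S.
Context d (T : measurableType d) (R : realType) (P : probability T R).

Lemma int_restr_push (Y : T -> R) (mY : measurable_fun setT Y) (S : set T) (mS : measurable S)
  (h : R -> \bar R) (mh : measurable_fun setT h) (h0 : forall x, 0 <= h x) :
  \int[P]_(w in S) (h \o Y) w = \int[pushforward (mrestr P mS) Y]_(x in setT) h x.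
Proof.
rewrite ge0_integral_pushforward//; try by move=> ? _; exact: h0.
rewrite preimage_setT.
rewrite -(setUv S) ge0_integral_setU//; last 4 first.
- exact: measurableC.
- rewrite setUv; apply: measurableT_comp => //.
- by move=> x _; exact: h0.
- exact/disj_set2P/setICr.
rewrite (@null_set_integral _ _ _ _ (~` S)); last 3 first.
- exact: measurableC.
- apply: measurableT_comp => //; exact: measurable_funTS.
- by change (P (~` S `&` S) = 0); rewrite setICl measure0.
rewrite adde0; apply: eq_measure_integral => A mA AS /=.
by rewrite /mrestr setIidl.
Qed.

Lemma int_indep (Y : T -> R) (mY : measurable_fun setT Y) (A E : set T)
  (mA : measurable A) (mE : measurable E)
  (hind : forall B, measurable B -> P ((Y @^-1` B `&` A) `&` E) = P (Y @^-1` B `&` A) * P E)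
  (iY : P.-integrable setT (EFin \o Y)) :
  \int[P]_(w in A `&` E) (Y w)%:E = P E * \int[P]_(w in A) (Y w)%:E.
Proof.
pose c : {nonneg R} := NngNum (fine_ge0 (measure_ge0 P E)).
have cE : (c%:num)%:E = P E by rewrite /= fineK// fin_num_measure.
have key (h : R -> \bar R) (mh : measurable_fun setT h) (h0 : forall x, 0 <= h x) :
    \int[P]_(w in A `&` E) (h \o Y) w = P E * \int[P]_(w in A) (h \o Y) w.
  rewrite (@int_restr_push Y mY _ (measurableI _ _ mA mE) h mh h0) (@int_restr_push Y mY _ mA h mh h0).
  rewrite -cE -ge0_integral_mscale//; try by move=> x _; exact: h0.
  apply: eq_measure_integral => B mB _.
  change (P (Y @^-1` B `&` (A `&` E)) = (c%:num)%:E * P (Y @^-1` B `&` A)).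
  by rewrite setIA hind// cE muleC.
have mEF : measurable_fun setT (@EFin R) by exact: EFin_measurable.
have iA : P.-integrable A (EFin \o Y) by exact: integrableS iY.
have kp := key _ (measurable_funepos mEF) (fun x => funepos_ge0 _ x).
have kn := key _ (measurable_funeneg mEF) (fun x => funeneg_ge0 _ x).
have ep : (fun x => (Y x)%:E)^\+ = (@EFin R)^\+ \o Y := funepos_comp _ _.
have en : (fun x => (Y x)%:E)^\- = (@EFin R)^\- \o Y := funeneg_comp _ _.
rewrite integralE [X in _ = _ * X]integralE ep en.
rewrite kp kn.
rewrite [RHS]muleBr ?fin_num_measure//.
apply: fin_num_adde_defl.
rewrite fin_numN.
apply: integrable_fin_num => //.
by rewrite -en; exact: integrable_funeneg.
Qed.

Lemma bigU_mem (I : eqType) (s : seq I) (F : I -> set T) w :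
  (\big[setU/set0]_(i <- s) F i) w <-> exists2 i, i \in s & F i w.
Proof.
elim: s => [|a s IH]; first by rewrite big_nil; split => // -[].
rewrite big_cons; split.
- case=> [Fa|/IH [i si Fi]]; first by exists a; rewrite ?mem_head.
  by exists i; rewrite // in_cons si orbT.
- move=> [i]; rewrite in_cons => /orP[/eqP -> Fa|si Fi]; first by left.
  by right; apply/IH; exists i.
Qed.

Lemma part_int (I : finType) (F : I -> set T) (mF : forall i, measurable (F i))
  (cov : forall w, exists i, F i w) (disj : forall i j w, F i w -> F j w -> i = j)
  (S : set T) (mS : measurable S) (f : T -> R) (mf : measurable_fun setT f) :
  \int[P]_(w in S) (f w)%:E = \sum_(i : I) \int[P]_(w in S `&` F i) (f w)%:E.
Proof.
have eS : S = \big[setU/set0]_(i <- enum I) (S `&` F i).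
  apply/seteqP; split => w.
  - move=> Sw; have [i Fi] := cov w; apply/bigU_mem; exists i => //.
    by rewrite mem_enum.
  - by move/bigU_mem => [i _ []].
have := @integral_bigsetU_EFin _ _ _ P I (fun i => S `&` F i) f (enum I).
rewrite /= -eS big_enum /= => ->.
- by apply: eq_bigl => i; rewrite inE.
- by move=> i; exact: measurableI.
- exact: enum_uniq.
- apply/trivIsetP => i j _ _ nij; apply/seteqP; split => w // [[_ Fi] [_ Fj]].
  by move/eqP: nij; apply; exact: disj Fi Fj.
- by apply: measurable_funTS; exact/measurable_EFinP.
Qed.

Lemma part_meas (I : finType) (F : I -> set T) (mF : forall i, measurable (F i))
  (cov : forall w, exists i, F i w) (disj : forall i j w, F i w -> F j w -> i = j)
  (S : set T) (mS : measurable S) :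
  P S = \sum_(i : I) P (S `&` F i).
Proof.
have h D (mD : measurable D) : \int[P]_(w in D) ((fun _ => 1%R) w)%:E = P D.
  by have := integral_cst P mD 1%:E; rewrite mul1e => <-; apply: eq_integral.
rewrite -h // (@part_int I F mF cov disj S mS); last exact: measurable_cst.
by apply: eq_bigr => i _; rewrite h //; exact: measurableI.
Qed.
End S.

Section Model.
Context d (T : measurableType d) (R : realType) (P : probability T R) (L : nat)
  (Y0 Y1 : T -> R) (Tp : T -> {ffun {ffun 'I_L -> bool} -> bool})
  (Z : T -> {ffun 'I_L -> bool}).
Context (mY0 : measurable_fun setT Y0) (mY1 : measurable_fun setT Y1)
  (mTp : forall t, measurable [set w | Tp w = t])
  (mZ : forall z, measurable [set w | Z w = z])
  (iY0 : P.-integrable setT (EFin \o Y0)) (iY1 : P.-integrable setT (EFin \o Y1))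
  (hA1 : indepA1 P Y0 Y1 Tp Z).

Local Notation Zval := {ffun 'I_L -> bool}.
Local Notation ctype := {ffun Zval -> bool}.

Definition Et (t : ctype) := [set w | Tp w = t].
Definition Ez (z : Zval) := [set w | Z w = z].
Definition cell (i : ctype * Zval) := Et i.1 `&` Ez i.2.

Lemma mcell i : measurable (cell i).
Proof. by apply: measurableI; [exact: mTp | exact: mZ]. Qed.

Lemma cell_cov w : exists i, cell i w.
Proof. by exists (Tp w, Z w). Qed.

Lemma cell_disj i j w : cell i w -> cell j w -> i = j.
Proof. by case: i j => [? ?] [? ?] [/= <- <-] [/= -> ->]. Qed.

Lemma Et_cov w : exists t, Et t w.
Proof. by exists (Tp w). Qed.

Lemma Et_disj i j w : Et i w -> Et j w -> i = j.
Proof. by rewrite /Et /= => <- <-. Qed.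

Lemma P_cell t z : P (cell (t, z)) = P (Et t) * P (Ez z).
Proof.
have := hA1 setT setT t z (@measurableT _ R) (@measurableT _ R).
have -> : [set w | [set: R] (Y0 w) /\ [set: R] (Y1 w) /\ Tp w = t] = Et t.
  by apply/seteqP; split => w /=; [case=> _ [] | move=> ?; split].
by [].
Qed.

Lemma int_cell0 t z :
  \int[P]_(w in cell (t, z)) (Y0 w)%:E = P (Ez z) * \int[P]_(w in Et t) (Y0 w)%:E.
Proof.
apply: int_indep => //; try exact: mTp; try exact: mZ.
move=> B mB; have := hA1 B setT t z mB (@measurableT _ R).
have -> // : [set w | B (Y0 w) /\ [set: R] (Y1 w) /\ Tp w = t] = Y0 @^-1` B `&` Et t.
by apply/seteqP; split => w /=; [case=> ? [] | case].
Qed.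

Lemma int_cell1 t z :
  \int[P]_(w in cell (t, z)) (Y1 w)%:E = P (Ez z) * \int[P]_(w in Et t) (Y1 w)%:E.
Proof.
apply: int_indep => //; try exact: mTp; try exact: mZ.
move=> B mB; have := hA1 setT B t z (@measurableT _ R) mB.
have -> // : [set w | [set: R] (Y0 w) /\ B (Y1 w) /\ Tp w = t] = Y1 @^-1` B `&` Et t.
by apply/seteqP; split => w /=; [case=> ? [] | case].
Qed.


Lemma mDset : measurable [set w | Dobs Tp Z w].
Proof.
have -> : [set w | Dobs Tp Z w] = \big[setU/set0]_(i <- enum {: ctype * Zval})
    (if i.1 i.2 then cell i else set0).
  apply/seteqP; split => w.
  - move=> Dw; apply/bigU_mem; exists (Tp w, Z w); first by rewrite mem_enum.
    by move: Dw; rewrite /= /Dobs => ->.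
  - move/bigU_mem => [[t z] _] /=; case: ifP => // tz [/= Ht Hz].
    by rewrite /Dobs Ht Hz.
apply: bigsetU_measurable => i _; case: ifP => _; [exact: mcell | exact: measurable0].
Qed.

Lemma mD : measurable_fun setT (fun w => (Dobs Tp Z w)%:R : R).
Proof.
have -> : (fun w => (Dobs Tp Z w)%:R : R) = \1_[set w | Dobs Tp Z w].
  apply/funext => w; rewrite indicE; case Dw: (Dobs Tp Z w); first by rewrite mem_set.
by rewrite memNset //= Dw.
exact: measurable_indic mDset.
Qed.

Lemma mYobs : measurable_fun setT (Yobs Y0 Y1 Tp Z).
Proof.
rewrite /Yobs; apply: measurable_fun_if => //.
- by apply: (measurable_fun_bool true); rewrite setTI; exact: mDset.
- exact: measurable_funTS.
- exact: measurable_funTS.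
Qed.

Lemma mEt t : measurable (Et t). Proof. exact: mTp. Qed.
Lemma mEz z : measurable (Ez z). Proof. exact: mZ. Qed.

Lemma fin_Et0 t : \int[P]_(w in Et t) (Y0 w)%:E \is a fin_num.
Proof. apply: integrable_fin_num; first exact: mEt.
exact: (integrableS measurableT (mEt t) (subsetT _) iY0). Qed.
Lemma fin_Et1 t : \int[P]_(w in Et t) (Y1 w)%:E \is a fin_num.
Proof. apply: integrable_fin_num; first exact: mEt.
exact: (integrableS measurableT (mEt t) (subsetT _) iY1). Qed.

Lemma int_Yobs_cell t z : \int[P]_(w in cell (t, z)) (Yobs Y0 Y1 Tp Z w)%:E =
  P (Ez z) * (if t z then \int[P]_(w in Et t) (Y1 w)%:E else \int[P]_(w in Et t) (Y0 w)%:E).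
Proof.
have -> : \int[P]_(w in cell (t, z)) (Yobs Y0 Y1 Tp Z w)%:E =
    \int[P]_(w in cell (t, z)) (if t z then Y1 w else Y0 w)%:E.
  by apply: eq_integral => w /[!inE] -[/= Ht Hz]; rewrite /Yobs /Dobs Ht Hz.
case: (t z); [exact: int_cell1 | exact: int_cell0].
Qed.

Lemma int_D_cell t z : \int[P]_(w in cell (t, z)) ((Dobs Tp Z w)%:R : R)%:E =
  ((t z)%:R : R)%:E * (P (Et t) * P (Ez z)).
Proof.
rewrite -P_cell -integral_cst; last exact: mcell.
by apply: eq_integral => w /[!inE] -[/= Ht Hz]; rewrite /Dobs Ht Hz.
Qed.


Definition ez z := fine (P (Ez z)).
Definition th t := fine (P (Et t)).
Definition mm0 t := fine (\int[P]_(w in Et t) (Y0 w)%:E).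
Definition mm1 t := fine (\int[P]_(w in Et t) (Y1 w)%:E).

Lemma finP A : measurable A -> P A \is a fin_num.
Proof. by move=> mA; exact: fin_num_measure. Qed.

Lemma NY S (b : Zval -> bool) (mS : measurable S)
  (hS : forall i, S `&` cell i = if b i.2 then cell i else set0) :
  fine (\int[P]_(w in S) (Yobs Y0 Y1 Tp Z w)%:E) =
  (\sum_(t : ctype) \sum_(z : Zval) (if b z then ez z * (if t z then mm1 t else mm0 t) else 0))%R.
Proof.
rewrite (@part_int _ _ _ P _ cell mcell cell_cov cell_disj S mS _ mYobs).
have E i : \int[P]_(w in S `&` cell i) (Yobs Y0 Y1 Tp Z w)%:E =
    if b i.2 then P (Ez i.2) * (if i.1 i.2 then \int[P]_(w in Et i.1) (Y1 w)%:E
                                else \int[P]_(w in Et i.1) (Y0 w)%:E) else 0.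
  case: i => t z; rewrite hS /=; case: (b z); [exact: int_Yobs_cell | exact: integral_set0].
rewrite -sum_fine; last first.
  move=> i _; rewrite E; case: ifP => // _; apply: fin_numM; first exact: finP (mEz _).
  by case: ifP => _; [exact: fin_Et1 | exact: fin_Et0].
rewrite pair_bigA /=; apply: eq_bigr => -[t z] _; rewrite E /=; case: (b z) => //=.
rewrite fineM; first by case: (t z).
- exact: finP (mEz _).
- by case: (t z); [exact: fin_Et1 | exact: fin_Et0].
Qed.

Lemma ND S (b : Zval -> bool) (mS : measurable S)
  (hS : forall i, S `&` cell i = if b i.2 then cell i else set0) :
  fine (\int[P]_(w in S) ((Dobs Tp Z w)%:R : R)%:E) =
  (\sum_(t : ctype) \sum_(z : Zval) (if b z then (t z)%:R * (th t * ez z) else 0))%R.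
Proof.
rewrite (@part_int _ _ _ P _ cell mcell cell_cov cell_disj S mS _ mD).
have E i : \int[P]_(w in S `&` cell i) ((Dobs Tp Z w)%:R : R)%:E =
    if b i.2 then ((i.1 i.2)%:R : R)%:E * (P (Et i.1) * P (Ez i.2)) else 0.
  case: i => t z; rewrite hS /=; case: (b z); [exact: int_D_cell | exact: integral_set0].
rewrite -sum_fine; last first.
  move=> i _; rewrite E; case: ifP => // _; apply: fin_numM => //.
  by apply: fin_numM; [exact: finP (mEt _) | exact: finP (mEz _)].
rewrite pair_bigA /=; apply: eq_bigr => -[t z] _; rewrite E /=; case: (b z) => //=.
rewrite fineM //; last by apply: fin_numM; [exact: finP (mEt _) | exact: finP (mEz _)].
rewrite fineM //; [exact: finP (mEt _) | exact: finP (mEz _)].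
Qed.

Lemma NP S (b : Zval -> bool) (mS : measurable S)
  (hS : forall i, S `&` cell i = if b i.2 then cell i else set0) :
  fine (P S) = (\sum_(t : ctype) \sum_(z : Zval) (if b z then th t * ez z else 0))%R.
Proof.
rewrite (@part_meas _ _ _ P _ cell mcell cell_cov cell_disj S mS).
rewrite -sum_fine; last first.
  by move=> i _; rewrite hS; case: ifP => _; [exact: finP (mcell _) | rewrite measure0].
rewrite pair_bigA /=; apply: eq_bigr => -[t z] _; rewrite hS /=; case: (b z) => //=.
  by rewrite P_cell fineM //; [exact: finP (mEt _) | exact: finP (mEz _)].
by rewrite measure0.
Qed.

Lemma sum_th : (\sum_(t : ctype) th t = 1)%R.
Proof.
have := @part_meas _ _ _ P _ Et mEt Et_cov Et_disj setT measurableT.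
rewrite probability_setT => /(congr1 fine) /= ->.
rewrite -sum_fine; last by move=> i _; exact: finP (measurableI _ _ measurableT (mEt _)).
by apply: eq_bigr => t _; rewrite setTI.
Qed.

Lemma mZb (b : Zval -> bool) : measurable [set w | b (Z w)].
Proof.
have -> : [set w | b (Z w)] = \big[setU/set0]_(z <- enum {: Zval})
    (if b z then Ez z else set0).
  apply/seteqP; split => w.
  - move=> bw; apply/bigU_mem; exists (Z w); first by rewrite mem_enum.
    by move: bw; rewrite /= => ->.
  - move/bigU_mem => [z _] /=; case: ifP => // bz Hz.
    by rewrite /= (Hz : Z w = z).
apply: bigsetU_measurable => i _; case: ifP => _; [exact: mEz | exact: measurable0].
Qed.

Lemma hSb (b : Zval -> bool) i :
  [set w | b (Z w)] `&` cell i = if b i.2 then cell i else set0.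
Proof.
case: i => t z /=; case: ifP => bz; apply/seteqP; split => w //=.
- by case.
- by move=> [Ht Hz]; split => //; rewrite /= (Hz : Z w = z).
- by move=> [bw [_ Hz]]; move: bw; rewrite (Hz : Z w = z) bz.
Qed.


Lemma eZl0 l : Zl0 Z l = ~` Zl1 Z l.
Proof. by apply/seteqP; split => w /=; move/negP. Qed.

Lemma pZl0 l : posdef (SigmaZ P Z) -> (0 < pr P (Zl0 Z l))%R.
Proof.
move=> hpd.
have mZl1 : measurable (Zl1 Z l) := mZb (fun z => z l).
have mZl0 : measurable (Zl0 Z l) := mZb (fun z => ~~ z l).
rewrite lt_neqAle fine_ge0 ?measure_ge0 // andbT; apply/negP => /eqP h0.
have P0 : P (Zl0 Z l) = 0.
  by rewrite -[P _]fineK; [rewrite /pr in h0; rewrite -h0 | exact: finP].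
have P1 : P (Zl1 Z l) = 1.
  have := probability_setC P mZl1; rewrite -eZl0 P0 => /esym/eqP.
  by rewrite sube_eq // add0e => /eqP <-.
pose X := fun w => ((Z w l)%:R : R).
have EX : 'E_P[X] = 1.
  rewrite expectation.unlock.
  transitivity (\int[P]_(w in setT) (\1_(Zl1 Z l) w)%:E).
    apply: eq_integral => w _; rewrite indicE /X.
    case: (boolP (Z w l)) => zl; first by rewrite mem_set.
    by rewrite memNset //; exact/negP.
  by rewrite integral_indic // setIT.
have cov0 : covariance P X X = 0.
  rewrite covariance.unlock EX /= expectation.unlock.
  transitivity (\int[P]_(w in setT) (\1_(Zl0 Z l) w)%:E).
    apply: eq_integral => w _; rewrite indicE.
    rewrite [X in X%:E = _](_ : _ = ((Z w l)%:R - 1) * ((Z w l)%:R - 1))%R; last by [].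
    case: (boolP (Z w l)) => zl.
      by rewrite memNset /= ?subrr ?mulr0 //; apply/negP; rewrite negbK.
    by rewrite mem_set //= sub0r mulrNN mulr1.
  by rewrite integral_indic // setIT.
have nz : (delta_mx ord0 l : 'rV[R]_L) != 0%R.
  apply/eqP => /matrixP /(_ ord0 l); rewrite !mxE !eqxx /= => /eqP.
  by rewrite oner_eq0.
have := hpd _ nz.
rewrite trmx_delta -rowE -colE !mxE /X in cov0 *.
by rewrite cov0 /= ltxx.
Qed.


Local Open Scope ring_scope.

Definition asum (b : Zval -> bool) := \sum_(z : Zval) (if b z then ez z else 0).
Definition csum (t : ctype) (b : Zval -> bool) :=
  \sum_(z : Zval) (if b z then (t z)%:R * ez z else 0).

Lemma NP_split b :
  \sum_(t : ctype) \sum_(z : Zval) (if b z then th t * ez z else 0) = asum b.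
Proof.
rewrite exchange_big /asum; apply: eq_bigr => z _; case: (b z).
  by rewrite -mulr_suml sum_th mul1r.
by rewrite big1.
Qed.

Lemma ND_split b :
  \sum_(t : ctype) \sum_(z : Zval) (if b z then (t z)%:R * (th t * ez z) else 0) =
  \sum_(t : ctype) th t * csum t b.
Proof.
apply: eq_bigr => t _; rewrite /csum mulr_sumr; apply: eq_bigr => z _.
by case: (b z); rewrite ?mulr0 // mulrCA.
Qed.

Lemma NY_split b :
  \sum_(t : ctype) \sum_(z : Zval) (if b z then ez z * (if t z then mm1 t else mm0 t) else 0) =
  (\sum_(t : ctype) mm0 t) * asum b + \sum_(t : ctype) (mm1 t - mm0 t) * csum t b.
Proof.
rewrite mulr_suml -big_split; apply: eq_bigr => t _ /=.
rewrite /asum /csum mulr_sumr mulr_sumr -big_split; apply: eq_bigr => z _ /=.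
by case: (b z); case: (t z) => /=; ring.
Qed.

Lemma LATEth t : LATE P Y0 Y1 Tp t * th t = mm1 t - mm0 t.
Proof.
have iE1 : P.-integrable (Et t) (EFin \o Y1).
  exact: (integrableS measurableT (mEt t) (subsetT _) iY1).
have iE0 : P.-integrable (Et t) (EFin \o Y0).
  exact: (integrableS measurableT (mEt t) (subsetT _) iY0).
have hB : fine (\int[P]_(w in Et t) ((Y1 w - Y0 w)%R)%:E) = mm1 t - mm0 t :=
  RintegralB (mEt t) iE1 iE0.
rewrite /LATE /condE hB.
change (pr P [set w | Tp w = t]) with (th t).
have [h|h] := eqVneq (th t) 0; last by rewrite divfK.
have P0 : P (Et t) = 0%E.
  by rewrite -[P _]fineK; [rewrite /th in h; rewrite h | exact: finP (mEt t)].
have z1 : mm1 t = 0.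
  rewrite /mm1 null_set_integral //; first exact: mEt.
  by apply/measurable_EFinP; exact: measurable_funTS.
have z0 : mm0 t = 0.
  rewrite /mm0 null_set_integral //; first exact: mEt.
  by apply/measurable_EFinP; exact: measurable_funTS.
by rewrite h mulr0 z1 z0 subrr.
Qed.


Lemma phiE l t (pa1 : pr P (Zl1 Z l) = asum (fun z => z l))
  (pa0 : pr P (Zl0 Z l) = asum (fun z => ~~ z l)) :
  phi P Z t l = csum t (fun z => z l) / asum (fun z => z l)
              - csum t (fun z => ~~ z l) / asum (fun z => ~~ z l).
Proof.
set a1 := asum _; set a0 := asum _.
have Eq1 (z : Zval) : ~~ z l -> q_ P Z l z = ez (setc z l true) / a1.
  move=> zl; rewrite /q_ pa1; congr (fine (P _) / _).
  apply/seteqP; split => w /=.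
  - move=> [Zl H]; apply/ffunP => j; rewrite ffunE.
    by case: eqP => [->|/eqP jl]; [exact: Zl | exact: H].
  - move=> ->; rewrite ffunE eqxx; split => // j jl; by rewrite ffunE (negbTE jl).
have Eq0 (z : Zval) : ~~ z l -> q0_ P Z l z = ez z / a0.
  move=> zl; rewrite /q0_ pa0; congr (fine (P _) / _).
  apply/seteqP; split => w /=.
  - move=> [nZl H]; apply/ffunP => j.
    by case: (eqVneq j l) => [->|jl]; [rewrite (negbTE nZl) (negbTE zl) | exact: H].
  - by move=> ->; split.
have sz (z : Zval) : ~~ z l -> setc z l false = z.
  move=> zl; apply/ffunP => j; rewrite ffunE.
  by case: eqVneq => [->|] //; rewrite (negbTE zl).
rewrite /phi (eq_bigr (fun z => (t (setc z l true))%:R * (ez (setc z l true) / a1)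
    - (t z)%:R * (ez z / a0))); last by move=> z zl; rewrite Eq1 // Eq0 // sz.
rewrite sumrB; congr (_ - _); last first.
  by rewrite /csum -big_mkcond mulr_suml; apply: eq_bigr => z _; rewrite mulrA.
pose f (z : Zval) := setc z l (~~ z l).
have fK : involutive f.
  move=> z; apply/ffunP => j; rewrite /f !ffunE.
  by case: eqVneq => [->|//]; rewrite eqxx negbK.
rewrite /csum -big_mkcond mulr_suml (reindex_inj (inv_inj fK)) /=.
apply: eq_big => z; first by rewrite /f ffunE eqxx negbK.
move=> h; have zl : z l by move: h; rewrite /f ffunE eqxx negbK.
have -> : setc (f z) l true = z.
  apply/ffunP => j; rewrite /f !ffunE.
  by case: eqVneq => [->|] //; rewrite zl.
by rewrite mulrA.
Qed.

Lemma main l : 0 < p_ P Z l -> 0 < pi_ P Tp Z l -> 0 < pr P (Zl0 Z l) ->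
  Wald P Y0 Y1 Tp Z l = \sum_(t : ctype) LATE P Y0 Y1 Tp t * alpha P Tp Z t l
  /\ \sum_(t : ctype) alpha P Tp Z t l = 1.
Proof.
move=> pp ppi pp0.
have pa1 : pr P (Zl1 Z l) = asum (fun z => z l).
  exact: etrans (@NP (Zl1 Z l) (fun z => z l) (mZb (fun z => z l)) (hSb (fun z => z l))) (NP_split _).
have pa0 : pr P (Zl0 Z l) = asum (fun z => ~~ z l).
  exact: etrans (@NP (Zl0 Z l) (fun z => ~~ z l) (mZb (fun z => ~~ z l)) (hSb (fun z => ~~ z l))) (NP_split _).
have a1n : asum (fun z => z l) != 0 by rewrite -pa1; exact: lt0r_neq0.
have a0n : asum (fun z => ~~ z l) != 0 by rewrite -pa0; exact: lt0r_neq0.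
have N1 : fine (\int[P]_(w in Zl1 Z l) (Yobs Y0 Y1 Tp Z w)%:E) =
    (\sum_(t : ctype) mm0 t) * asum (fun z => z l) +
    \sum_(t : ctype) (mm1 t - mm0 t) * csum t (fun z => z l).
  exact: etrans (@NY (Zl1 Z l) (fun z => z l) (mZb (fun z => z l)) (hSb (fun z => z l))) (NY_split _).
have N0 : fine (\int[P]_(w in Zl0 Z l) (Yobs Y0 Y1 Tp Z w)%:E) =
    (\sum_(t : ctype) mm0 t) * asum (fun z => ~~ z l) +
    \sum_(t : ctype) (mm1 t - mm0 t) * csum t (fun z => ~~ z l).
  exact: etrans (@NY (Zl0 Z l) (fun z => ~~ z l) (mZb (fun z => ~~ z l)) (hSb (fun z => ~~ z l))) (NY_split _).
have D1 : fine (\int[P]_(w in Zl1 Z l) ((Dobs Tp Z w)%:R : R)%:E) =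
    \sum_(t : ctype) th t * csum t (fun z => z l).
  exact: etrans (@ND (Zl1 Z l) (fun z => z l) (mZb (fun z => z l)) (hSb (fun z => z l))) (ND_split _).
have D0 : fine (\int[P]_(w in Zl0 Z l) ((Dobs Tp Z w)%:R : R)%:E) =
    \sum_(t : ctype) th t * csum t (fun z => ~~ z l).
  exact: etrans (@ND (Zl0 Z l) (fun z => ~~ z l) (mZb (fun z => ~~ z l)) (hSb (fun z => ~~ z l))) (ND_split _).
have sumE (F : ctype -> R) :
    \sum_(t : ctype) F t * phi P Z t l =
    (\sum_(t : ctype) F t * csum t (fun z => z l)) / asum (fun z => z l)
    - (\sum_(t : ctype) F t * csum t (fun z => ~~ z l)) / asum (fun z => ~~ z l).
  rewrite (eq_bigr _ (fun t _ => congr1 (fun x => F t * x) (phiE l t pa1 pa0))).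
  rewrite !mulr_suml -sumrB; apply: eq_bigr => t _.
  by rewrite mulrBr !mulrA.
have rhoE : rho_ P Y0 Y1 Tp Z l = \sum_(t : ctype) (mm1 t - mm0 t) * phi P Z t l.
  rewrite /rho_ /condE N1 N0 pa1 pa0 sumE.
  rewrite !mulrDl !mulfK //; ring.
have piE : pi_ P Tp Z l = \sum_(t : ctype) th t * phi P Z t l.
  by rewrite /pi_ /condE D1 D0 pa1 pa0 sumE.
have pin : pi_ P Tp Z l != 0 by exact: lt0r_neq0.
split.
- rewrite /Wald rhoE mulr_suml; apply: eq_bigr => t _.
  rewrite -LATEth /alpha.
  change (theta P Tp t) with (th t).
  by rewrite !mulrA.
- rewrite /alpha -mulr_suml.
  change (\sum_(t : ctype) theta P Tp t * phi P Z t l) with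
    (\sum_(t : ctype) th t * phi P Z t l).
  by rewrite -piE divff.
Qed.

End Model.

Local Close Scope ereal_scope.

Theorem proposition1 (d : measure_display) (T : measurableType d) (R : realType)
  (P : probability T R) (L : nat)
  (Y0 Y1 : T -> R) (Tp : T -> {ffun {ffun 'I_L -> bool} -> bool})
  (Z : T -> {ffun 'I_L -> bool}) :
  (2 <= L)%N ->
  measurable_fun setT Y0 -> measurable_fun setT Y1 ->
  (forall t, measurable [set w | Tp w = t]) ->
  (forall z, measurable [set w | Z w = z]) ->
  P.-integrable setT (EFin \o Y0) -> P.-integrable setT (EFin \o Y1) ->
  indepA1 P Y0 Y1 Tp Z ->
  monotoneA2 Tp ->
  (forall l : 'I_L, 0 < p_ P Z l /\ 0 < pi_ P Tp Z l) ->
  posdef (SigmaZ P Z) ->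
  forall l : 'I_L,
    Wald P Y0 Y1 Tp Z l =
      \sum_(t : {ffun {ffun 'I_L -> bool} -> bool})
         LATE P Y0 Y1 Tp t * alpha P Tp Z t l
    /\ \sum_(t : {ffun {ffun 'I_L -> bool} -> bool}) alpha P Tp Z t l = 1.
Proof.
move=> _ mY0 mY1 mTp mZ iY0 iY1 hA1 _ hpos hpd l.
have [pp ppi] := hpos l.
have pp0 : 0 < pr P (Zl0 Z l) by apply: pZl0.
by apply: main.
Qed.
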